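(* Fix integers $m,n\ge2$. There exists a nonzero polynomial $\Psi_{m,n}$ with integer coefficients in the variables $a_0,\dots,a_m,b_0,\dots,b_n,c_0,\dots,c_n$ with the following property: for every field $k$ and all $f=\sum_{i=0}^ma_ix^{m-i}$, $g=\sum_{j=0}^nb_jx^{n-j}$, $h=\sum_{j=0}^nc_jx^{n-j}$ in $k[x]$, if there exists $(s,t)\in k^2\setminus\{(0,0)\}$ with $\deg\gcd(f,sg+th)\ge2$, then $\Psi_{m,n}(f,g,h)=0$ (evaluating at the coefficients of $f,g,h$). *)

(* Defs.v *)
From HB Require Import structures.
From mathcomp Require Import all_boot all_order all_algebra.
From mathcomp Require Import mpoly.
Set Implicit Arguments. Unset Strict Implicit. Unset Printing Implicit Defensive.
Import GRing.Theory.
Local Open Scope ring_scope.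

Definition poly_of_coefs (k : ringType) (d : nat) (a : 'I_d.+1 -> k) : {poly k} :=
  \sum_(i < d.+1) a i *: 'X^(d - i).

(* Coefficient vector (a_0..a_m, b_0..b_n, c_0..c_n), indexed by
   'I_(m.+1 + n.+1 + n.+1) in this order. *)
Definition coef_vec (k : ringType) (m n : nat)
  (a : 'I_m.+1 -> k) (b c : 'I_n.+1 -> k) : 'I_(m.+1 + n.+1 + n.+1) -> k :=
  fun i => match split i with
           | inl j => match split j with inl j1 => a j1 | inr j2 => b j2 end
           | inr j => c j
           end.

Definition eval_int_mpoly (k : ringType) (N : nat) (P : {mpoly int[N]})
  (v : 'I_N -> k) : k :=
  mmap (fun z : int => z%:~R) v P.

(* Main.v *)
Require Import Defs.
From HB Require Import structures.
From mathcomp Require Import all_boot all_order all_algebra.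
From mathcomp Require Import mpoly.
From mathcomp Require Import qfpoly.
From mathcomp Require Import zify.
From Stdlib Require Import Classical.
Set Implicit Arguments. Unset Strict Implicit. Unset Printing Implicit Defensive.
Import GRing.Theory.
Local Open Scope ring_scope.
Section Res.
Variable R : comNzRingType.

Definition SylF (m D : nat) (p q : {poly R}) : 'M[R]_(D + m) :=
  \matrix_(i, j) match split i with
                 | inl i1 => if (i1 <= j)%N then p`_(j - i1) else 0
                 | inr i2 => if (i2 <= j)%N then q`_(j - i2) else 0 end.

Definition ResF m D p q := \det (SylF m D p q).

Definition cA m D (v : 'rV[R]_(D + m)) (i : nat) : R :=
  if insub i is Some i' then v 0 (lshift m i') else 0.
Definition cB m D (v : 'rV[R]_(D + m)) (i : nat) : R :=
  if insub i is Some i' then v 0 (rshift D i') else 0.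
Definition polA m D (v : 'rV[R]_(D + m)) : {poly R} := \poly_(i < D) cA v i.
Definition polB m D (v : 'rV[R]_(D + m)) : {poly R} := \poly_(i < m) cB v i.
Lemma cAE m D (v : 'rV[R]_(D + m)) (i : 'I_D) : cA v i = v 0 (lshift m i).
Proof. by rewrite /cA valK. Qed.
Lemma cBE m D (v : 'rV[R]_(D + m)) (i : 'I_m) : cB v i = v 0 (rshift D i).
Proof. by rewrite /cB valK. Qed.

Lemma polyC_mul_sum n (c : nat -> R) (p : {poly R}) :
  (\poly_(i < n) c i) * p = \sum_(i < n) c i *: ('X^i * p).
Proof.
by rewrite poly_def mulr_suml; apply: eq_bigr => i _; rewrite scalerAl.
Qed.

Lemma SylF_mul m D p q (v : 'rV[R]_(D + m)) j :
  (v *m SylF m D p q) 0 j = (polA v * p + polB v * q)`_j.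
Proof.
rewrite !mxE big_split_ord /= coefD /polA /polB !polyC_mul_sum !coef_sum.
congr (_ + _); apply: eq_bigr => i _; rewrite mxE coefZ coefXnM.
  by rewrite cAE (unsplitK (inl i)) leqNgt; case: ltnP.
by rewrite cBE (unsplitK (inr i)) leqNgt; case: ltnP.
Qed.

Lemma poly_sizeK (A : {poly R}) D : (size A <= D)%N -> \poly_(i < D) A`_i = A.
Proof.
move=> hA; apply/polyP => j; rewrite coef_poly; case: ltnP => // hj.
by rewrite nth_default // (leq_trans hA hj).
Qed.

Lemma row_of_polys m D (A B : {poly R}) :
  (size A <= D)%N -> (size B <= m)%N ->
  exists v : 'rV[R]_(D + m), polA v = A /\ polB v = B.
Proof.
move=> hA hB.
exists (\row_i match split i with inl i1 => A`_i1 | inr i2 => B`_i2 end).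
split.
  rewrite /polA -{2}(poly_sizeK hA); apply/polyP => j; rewrite !coef_poly.
  case: ltnP => // hj; rewrite (cAE _ (Ordinal hj)) mxE.
  by rewrite (unsplitK (inl (Ordinal hj))).
rewrite /polB -{2}(poly_sizeK hB); apply/polyP => j; rewrite !coef_poly.
case: ltnP => // hj; rewrite (cBE _ (Ordinal hj)) mxE.
by rewrite (unsplitK (inr (Ordinal hj))).
Qed.

Lemma polAB0 m D (v : 'rV[R]_(D + m)) : polA v = 0 -> polB v = 0 -> v = 0.
Proof.
move=> hA hB; apply/rowP => i; rewrite mxE.
rewrite -(splitK i); case: (split i) => [i1|i2] /=.
  have := congr1 (fun p : {poly R} => p`_i1) hA.
  by rewrite coef_poly ltn_ord coef0 cAE.
have := congr1 (fun p : {poly R} => p`_i2) hB.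
by rewrite coef_poly ltn_ord coef0 cBE.
Qed.

End Res.

Lemma ResF_map (R S : comNzRingType) (f : {rmorphism R -> S}) m D p q :
  f (ResF m D p q) = ResF m D (map_poly f p) (map_poly f q).
Proof.
rewrite /ResF -det_map_mx; congr (\det _); apply/matrixP => i j.
rewrite !mxE; case: split => x; case: ifP => _; rewrite ?rmorph0 //;
by rewrite coef_map.
Qed.

Lemma polA0 (R : comNzRingType) m D : polA (0 : 'rV[R]_(D + m)) = 0.
Proof.
apply/polyP => i; rewrite coef_poly coef0 /cA; case: ltnP => // _.
by case: insub => [?|] //; rewrite mxE.
Qed.
Lemma polB0 (R : comNzRingType) m D : polB (0 : 'rV[R]_(D + m)) = 0.
Proof.
apply/polyP => i; rewrite coef_poly coef0 /cB; case: ltnP => // _.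
by case: insub => [?|] //; rewrite mxE.
Qed.

Section ResField.
Variable K : fieldType.

Lemma SylF_zero m D (p q : {poly K}) (v : 'rV[K]_(D + m)) :
  polA v * p + polB v * q = 0 -> v *m SylF m D p q = 0.
Proof.
by move=> h; apply/rowP => j; rewrite SylF_mul h coef0 mxE.
Qed.

Lemma ResF_vanish m D (p q c : {poly K}) : (0 < m)%N ->
  (size p <= m.+1)%N -> (size q <= D.+1)%N -> (1 < size c)%N ->
  c %| p -> c %| q -> ResF m D p q = 0.
Proof.
move=> m0 sp sq sc cp cq; apply/eqP/det0P.
have c0 : c != 0 by rewrite -size_poly_gt0 (ltn_trans _ sc).
have [/andP[/eqP p0 /eqP q0]|npq] := boolP ((p == 0) && (q == 0)).
  have s0 : (size (0%R : {poly K}) <= D)%N by rewrite size_poly0.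
  have s1 : (size (1%R : {poly K}) <= m)%N by rewrite size_poly1.
  have [v [hA hB]] := row_of_polys s0 s1.
  exists v; last by apply: SylF_zero; rewrite hA hB p0 q0 !mulr0 addr0.
  by apply/eqP => v0; move: hB; rewrite v0 polB0 => /eqP; rewrite eq_sym oner_eq0.
have sA : (size (q %/ c)%R <= D)%N.
  rewrite size_divp // -subn1; move: sc sq; clear; move: (size _) (size _) => a b; lia.
have sB : (size (- (p %/ c))%R <= m)%N.
  rewrite size_polyN size_divp // -subn1; move: sc sp; clear; move: (size _) (size _) => a b; lia.
have [v [hA hB]] := row_of_polys sA sB.
exists v; last first.
  apply: SylF_zero; rewrite hA hB -{1}(divpK cp) -{2}(divpK cq).
  by rewrite mulNr mulrA [_ * (p %/ c)]mulrC mulrA subrr.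
apply/eqP => v0; move: npq; rewrite v0 polA0 polB0 in hA hB.
rewrite -(divpK cp) -(divpK cq) -hA -[p %/ c]opprK -hB oppr0 !mul0r eqxx.
by [].
Qed.

Lemma ResF_neq0 m D (p q : {poly K}) :
  size p = m.+1 -> (size q <= D.+1)%N -> coprimep p q -> ResF m D p q != 0.
Proof.
move=> sp sq cpq; apply/negP => /det0P [v nz vM].
set A := polA v; set B := polB v.
have sA : (size A <= D)%N by apply: size_poly.
have sB : (size B <= m)%N by apply: size_poly.
have E0 : A * p + B * q = 0.
  apply/polyP => j; rewrite coef0.
  have [hj|hj] := ltnP j (D + m).
    by have := congr1 (fun M : 'rV[K]_(D + m) => M 0 (Ordinal hj)) vM; rewrite SylF_mul mxE.
  apply: nth_default; apply: leq_trans (size_polyD _ _) _.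
  rewrite geq_max; apply/andP; split; apply: leq_trans (size_polyMleq _ _) _;
    rewrite ?sp; move: sA sB sq hj; move: (size A) (size B) (size q) => a b c; lia.
have p0 : p != 0 by rewrite -size_poly_gt0 sp.
have B0 : B = 0.
  apply/eqP; apply: contraT => nB.
  have : p %| B.
    rewrite -(Gauss_dvdpl _ cpq).
    have -> : B * q = - (A * p) by apply/eqP; rewrite -addr_eq0 addrC E0.
    by rewrite dvdpNr ?dvdp_mull.
  move=> /(dvdp_leq nB); rewrite sp => /leq_trans/(_ sB).
  by rewrite ltnn.
have A0 : A = 0.
  by move: E0; rewrite B0 mul0r addr0 => /eqP; rewrite mulf_eq0 (negbTE p0) orbF => /eqP.
by move: nz; rewrite (polAB0 A0 B0) eqxx.
Qed.

End ResField.
Lemma size_map_le (R S : nzSemiRingType) (f : R -> S) (p : {poly R}) :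
  (size (map_poly f p) <= size p)%N.
Proof. exact: size_poly. Qed.

Definition Wp (R : comNzRingType) (g h : {poly R}) : {poly {poly R}} :=
  g%:P * h^:P - g^:P * h%:P.

Lemma Wp_root (R : comNzRingType) (g h : {poly R}) : root (Wp g h) 'X.
Proof.
apply/eqP; rewrite /Wp hornerD hornerN !hornerM !hornerC.
have E : forall p : {poly R}, p^:P.['X] = p by move=> p; exact: comp_polyXr.
by rewrite !E mulrC subrr.
Qed.

Lemma map_mapC (R S : comNzRingType) (f : {rmorphism {poly R} -> S})
   (e : {rmorphism R -> S}) (h : {poly R}) :
  (forall c, f c%:P = e c) -> map_poly f h^:P = map_poly e h.
Proof. by move=> fC; apply/polyP => i; rewrite !coef_map /= fC. Qed.

Lemma Wp_mapG (R S : comNzRingType) (f : {rmorphism {poly R} -> S})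
   (e : {rmorphism R -> S}) (g h : {poly R}) :
  (forall c, f c%:P = e c) ->
  map_poly f (Wp g h) = (f g)%:P * map_poly e h - map_poly e g * (f h)%:P.
Proof.
move=> fC; rewrite /Wp rmorphB !rmorphM /= !map_polyC /=.
by rewrite !(map_mapC _ fC).
Qed.

Lemma Wp_map (R S : comNzRingType) (f : {rmorphism R -> S}) (g h : {poly R}) :
  map_poly (map_poly f) (Wp g h) = Wp (map_poly f g) (map_poly f h).
Proof.
rewrite (@Wp_mapG _ _ (map_poly f) (polyC \o f : {rmorphism R -> {poly S}})) //; last first.
  by move=> c; rewrite /= map_polyC.
rewrite /Wp; congr (_ * _ - _ * _); apply/polyP => i; rewrite !coef_map //.
Qed.
Lemma irr_factor (k : fieldType) (q : {poly k}) : (1 < size q)%N ->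
  exists p : {poly k}, [/\ irreducible_poly p, p \is monic & p %| q].
Proof.
move: {2}(size q) (leqnn (size q)) => N; elim: N q => [|N IH] q sq sq1.
  by move: sq sq1; move: (size q) => a; lia.
have q0 : q != 0 by rewrite -size_poly_gt0 (ltn_trans _ sq1).
case: (classic (irreducible_poly q)) => [irr|nirr].
  have lc0 : lead_coef q != 0 by rewrite lead_coef_eq0.
  exists ((lead_coef q)^-1 *: q); split.
  - split; first by rewrite size_scale ?invr_eq0 // irr.1.
    move=> r sr rd; apply: eqp_trans (irr r sr _) _.
      by rewrite -(dvdpZr _ _ (invr_neq0 lc0)).
    by rewrite eqp_sym eqp_scale ?invr_eq0.
  - by apply/monicP; rewrite lead_coefZ mulVf.
  - by rewrite dvdpZl ?invr_eq0.
have : ~ (forall r : {poly k}, size r != 1%N -> r %| q -> r %= q).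
  by move=> H; apply: nirr; split.
move=> /not_all_ex_not [r] H1.
have [sr H2] := imply_to_and _ _ H1; have [rq nrq] := imply_to_and _ _ H2.
have r0 : r != 0 by apply: contraTneq rq => ->; rewrite dvd0p.
have srq : (size r < size q)%N.
  rewrite ltn_neqAle dvdp_leq // andbT; apply/negP => /eqP e.
  by apply: nrq; rewrite -dvdp_size_eqp // e.
have h1 : (size r <= N)%N by rewrite -ltnS (leq_trans srq).
have h2 : (1 < size r)%N by rewrite ltn_neqAle eq_sym sr size_poly_gt0 r0.
have [p [pi pm pr]] := IH r h1 h2.
by exists p; split => //; apply: dvdp_trans rq.
Qed.
Lemma core_vanish (k : fieldType) (m Db D : nat) (F G H : {poly k})
    (B : {poly {poly k}}) :
  (0 < m)%N -> (size F <= m.+1)%N -> (size B <= Db.+1)%N ->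
  (size (ResF m Db F^:P B) <= D.+1)%N ->
  Wp G H = B * ('X - ('X)%:P) ->
  (exists s t : k, (s, t) != (0, 0) /\
      (2 < size (gcdp F (s *: G + t *: H)))%N) ->
  ResF m D F (ResF m Db F^:P B) = 0.
Proof.
move=> m0 sF sB sR hW [s [t [st sd]]].
set U := s *: G + t *: H; set d := gcdp F U.
have [p [pirr pmon pd]] := irr_factor (ltnW sd).
have hI : monic_irreducible_poly p := (pirr, pmon).
pose K := {poly %/ p with hI}.
pose ev : {rmorphism {poly k} -> K} := in_qpoly p.
pose e : {rmorphism k -> K} := qpolyC p.
have evH : forall q, ev q = (map_poly e q).[ev 'X].
  by move=> q; rewrite /ev /= -in_qpoly_comp_horner comp_polyXr.
have evC : forall c, ev c%:P = e c.
  by move=> c; rewrite evH map_polyC hornerC.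
have ev0 : forall q, (ev q == 0) = (p %| q).
  move=> q; rewrite /ev /= -(inj_eq val_inj) /=.
  by rewrite Pdiv.Field.dvdpE (mk_monicE hI).
set xb := ev 'X.
have pF : p %| F by apply: dvdp_trans pd (dvdp_gcdl _ _).
have pU : p %| U by apply: dvdp_trans pd (dvdp_gcdr _ _).
apply: (@ResF_vanish k m D F _ p m0 sF sR); [by case: pirr | exact: pF | ].
rewrite -ev0 (ResF_map ev).
have -> : map_poly ev F^:P = map_poly e F by apply: map_mapC.
set FK := map_poly e F; set BK := map_poly ev B.
set dK := map_poly e d.
have rd : root dK xb by rewrite /root -evH ev0.
have [e' he'] := factor_theorem _ _ rd.
have dK0 : dK != 0.
  by rewrite -size_poly_gt0 /dK size_map_poly (ltn_trans _ sd).
have e'0 : e' != 0 by apply: contraNneq dK0 => e0; rewrite he' e0 mul0r.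
have se' : (1 < size e')%N.
  have := sd; rewrite -/d -(size_map_poly e) -/dK he' size_Mmonic ?monicXsubC //.
  by rewrite size_XsubC addn2.
apply/eqP; apply: (@ResF_vanish _ _ _ _ _ e') => //.
- by rewrite size_map_poly.
- exact: leq_trans (size_map_le _ _) sB.
- apply: dvdp_trans (_ : dK %| FK); first by rewrite he' dvdp_mulIl.
  by rewrite /dK /FK dvdp_map dvdp_gcdl.
have WK : map_poly ev (Wp G H) = BK * ('X - xb%:P).
  by rewrite hW rmorphM rmorphB /= map_polyX map_polyC.
rewrite (Wp_mapG _ _ evC) in WK.
set GK := map_poly e G in WK; set HK := map_poly e H in WK.
have dU : dK %| e s *: GK + e t *: HK.
  have -> : e s *: GK + e t *: HK = map_poly e U by rewrite /U rmorphD /= !map_polyZ.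
  by rewrite /dK dvdp_map dvdp_gcdr.
have rel : e s * ev G + e t * ev H = 0.
  apply/eqP; move: pU; rewrite -ev0 /U -!mul_polyC rmorphD !rmorphM /= !evC.
  by [].
have WKp : (ev G)%:P * HK - GK * (ev H)%:P = ev G *: HK - ev H *: GK.
  by rewrite -!mul_polyC [GK * _]mulrC.
rewrite WKp in WK.
have dW : dK %| ev G *: HK - ev H *: GK.
  have [t0|t0] := eqVneq t 0.
    have s0 : s != 0 by move: st; rewrite t0; apply: contraNneq => ->.
    have es0 : e s != 0 by rewrite fmorph_eq0.
    rewrite -(dvdpZr _ _ es0).
    have -> : e s *: (ev G *: HK - ev H *: GK) = (- ev H) *: (e s *: GK + e t *: HK).
      rewrite t0 rmorph0 mul0r addr0 in rel.
      rewrite t0 rmorph0 scale0r addr0 scalerBr !scalerA rel scale0r sub0r.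
      by rewrite mulNr scaleNr mulrC.
    by rewrite -mul_polyC dvdp_mull.
  have et0 : e t != 0 by rewrite fmorph_eq0.
  rewrite -(dvdpZr _ _ et0).
  have -> : e t *: (ev G *: HK - ev H *: GK) = ev G *: (e s *: GK + e t *: HK).
    have E : e t * ev H = - (e s * ev G) by apply/eqP; rewrite -addr_eq0 addrC rel.
    rewrite scalerBr !scalerA scalerDr !scalerA E scaleNr opprK addrC.
    by rewrite [e t * _]mulrC [e s * _]mulrC.
  by rewrite -mul_polyC dvdp_mull.
rewrite WK he' in dW.
have [w hw] := dvdpP _ _ dW.
have : BK = w * e'.
  apply: (mulIf (monic_neq0 (monicXsubC xb))).
  by rewrite hw mulrA.
by move=> ->; rewrite dvdp_mull.
Qed.
Import Num.Theory.

Definition frat (m : nat) : {poly rat} := \prod_(i <- iota 0 m) ('X - ((i.+1)%:R)%:P).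

Lemma size_frat m : size (frat m) = m.+1.
Proof. by rewrite /frat size_prod_XsubC size_iota. Qed.

Lemma coprime_frat m (q : {poly rat}) :
  (forall i, (i < m)%N -> ~~ root q (i.+1)%:R) -> coprimep (frat m) q.
Proof.
rewrite /frat => h.
have : forall i, i \in iota 0 m -> ~~ root q (i.+1)%:R.
  by move=> i; rewrite mem_iota add0n => /andP[_]; apply: h.
elim: (iota 0 m) => [|x s IH] hs; first by rewrite big_nil coprime1p.
rewrite big_cons coprimepMl IH; last by move=> i hi; apply: hs; rewrite inE hi orbT.
by rewrite coprimep_sym coprimep_XsubC hs // inE eqxx.
Qed.

Lemma map_eval_C (x : rat) (p : {poly rat}) : map_poly (horner_eval x) p^:P = p.
Proof. by apply/polyP => i; rewrite !coef_map /= horner_evalE hornerC. Qed.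

Lemma core_nonzero (m n Db D : nat) (B : {poly {poly rat}}) :
  (0 < n)%N -> (size B <= Db.+1)%N ->
  (size (ResF m Db (frat m)^:P B) <= D.+1)%N ->
  Wp ('X^n) 1 = B * ('X - ('X)%:P) ->
  ResF m D (frat m) (ResF m Db (frat m)^:P B) != 0.
Proof.
move=> n0 sB sR hW.
apply: ResF_neq0 => //; first exact: size_frat.
apply: coprime_frat => i _; set x : rat := (i.+1)%:R.
have x0 : 0 < x by rewrite ltr0Sn.
rewrite /root -horner_evalE (ResF_map (horner_eval x)) map_eval_C.
set Bx := map_poly (horner_eval x) B.
apply: ResF_neq0; first exact: size_frat.
  exact: leq_trans (size_map_le _ _) sB.
apply: coprime_frat => j _; set y : rat := (j.+1)%:R.
have y0 : 0 < y by rewrite ltr0Sn.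
have hB : (x ^+ n)%:P - 'X^n = Bx * ('X - x%:P).
  have E1 : map_poly (horner_eval x) ('X - ('X)%:P) = 'X - x%:P.
    by rewrite rmorphB /= map_polyX map_polyC /= horner_evalE hornerX.
  have := congr1 (map_poly (horner_eval x)) hW.
  rewrite rmorphM /= E1 => <-.
  rewrite /Wp !rmorphB !rmorphM /= !map_polyC /= map_polyXn rmorph1 polyC1 !mulr1.
  by rewrite horner_evalE hornerXn map_polyXn.
set S := \sum_(i < n) 'X ^+ (n.-1 - i) * (x%:P) ^+ i.
have hS : 'X^n - (x ^+ n)%:P = ('X - x%:P) * S by rewrite rmorphXn subrXX.
have BS : Bx = - S.
  apply: (mulIf (monic_neq0 (monicXsubC x))).
  by rewrite -hB -opprB hS mulNr mulrC.
rewrite /root BS hornerN oppr_eq0 /S horner_sum.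
case: n n0 {hW hB hS BS S} => // n' _.
rewrite big_ord_recl /= !hornerE /= subn0.
apply: lt0r_neq0; apply: ltr_wpDr; last by rewrite exprn_gt0.
apply: sumr_ge0 => l _; rewrite !hornerE.
by rewrite mulr_ge0 // exprn_ge0 // ltW.
Qed.
Lemma split_l m n (i : 'I_m) : split (lshift n i) = inl i.
Proof. exact: (unsplitK (inl i)). Qed.
Lemma split_r m n (i : 'I_n) : split (rshift m i) = inr i.
Proof. exact: (unsplitK (inr i)). Qed.

Lemma poc_eq (R : nzRingType) d (a a' : 'I_d.+1 -> R) :
  (forall i, a i = a' i) -> poly_of_coefs a = poly_of_coefs a'.
Proof. by move=> h; rewrite /poly_of_coefs; apply: eq_bigr => i _; rewrite h. Qed.

Lemma map_poc (R S : nzRingType) (f : {rmorphism R -> S}) d (a : 'I_d.+1 -> R) :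
  map_poly f (poly_of_coefs a) = poly_of_coefs (fun i => f (a i)).
Proof.
rewrite /poly_of_coefs rmorph_sum; apply: eq_bigr => i _.
by rewrite /= map_polyZ map_polyXn.
Qed.

Lemma size_poc (R : nzRingType) d (a : 'I_d.+1 -> R) : (size (poly_of_coefs a) <= d.+1)%N.
Proof.
rewrite /poly_of_coefs; apply: (big_ind (fun p : {poly R} => (size p <= d.+1)%N)).
- by rewrite size_poly0.
- by move=> p q hp hq; rewrite (leq_trans (size_polyD _ _)) // geq_max hp hq.
move=> i _; rewrite (leq_trans (size_scale_leq _ _)) // size_polyXn ltnS.
exact: leq_subr.
Qed.

Lemma poc_coefs (R : comNzRingType) d (p : {poly R}) : (size p <= d.+1)%N ->
  poly_of_coefs (fun i : 'I_d.+1 => p`_(d - i)) = p.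
Proof.
move=> sp; rewrite /poly_of_coefs (reindex_inj rev_ord_inj) /=.
rewrite -{2}(poly_sizeK sp) poly_def; apply: eq_bigr => i _.
by rewrite subSS subKn // -ltnS.
Qed.

Theorem proposition7p1 (m n : nat) (hm : (2 <= m)%N) (hn : (2 <= n)%N) :
  exists Psi : {mpoly int[m.+1 + n.+1 + n.+1]},
    Psi != 0 /\
    forall (k : fieldType) (a : 'I_m.+1 -> k) (b c : 'I_n.+1 -> k),
      (exists s t : k, (s, t) != (0, 0) /\
         (2 < size (gcdp (poly_of_coefs a)
                         (s *: poly_of_coefs b + t *: poly_of_coefs c)))%N) ->
      eval_int_mpoly Psi (coef_vec a b c) = 0.
Proof.
pose R0 := {mpoly int[m.+1 + n.+1 + n.+1]}.
pose ga := fun i : 'I_m.+1 => ('X_(lshift n.+1 (lshift n.+1 i)) : R0).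
pose gb := fun i : 'I_n.+1 => ('X_(lshift n.+1 (rshift m.+1 i)) : R0).
pose gc := fun i : 'I_n.+1 => ('X_(rshift (m.+1 + n.+1) i) : R0).
pose f0 := poly_of_coefs ga; pose g0 := poly_of_coefs gb; pose h0 := poly_of_coefs gc.
have [B0 hB0] := factor_theorem _ _ (Wp_root g0 h0).
pose Db := size B0; pose Rk0 := ResF m Db f0^:P B0; pose D := size Rk0.
have key : forall (k : fieldType) (a : 'I_m.+1 -> k) (b c : 'I_n.+1 -> k),
  exists B : {poly {poly k}},
  [/\ eval_int_mpoly (ResF m D f0 Rk0) (coef_vec a b c) =
        ResF m D (poly_of_coefs a) (ResF m Db (poly_of_coefs a)^:P B),
      Wp (poly_of_coefs b) (poly_of_coefs c) = B * ('X - ('X)%:P),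
      (size B <= Db.+1)%N &
      (size (ResF m Db (poly_of_coefs a)^:P B) <= D.+1)%N].
  move=> k a b c.
  pose phi : {rmorphism R0 -> k} := mmap (fun z : int => z%:~R) (coef_vec a b c).
  have phiX : forall j, phi 'X_j = coef_vec a b c j.
    by move=> j; rewrite /phi /= mmapX mmap1U.
  have hf : map_poly phi f0 = poly_of_coefs a.
    by rewrite map_poc; apply: poc_eq => i; rewrite phiX /coef_vec !split_l.
  have hg : map_poly phi g0 = poly_of_coefs b.
    by rewrite map_poc; apply: poc_eq => i; rewrite phiX /coef_vec split_l split_r.
  have hh : map_poly phi h0 = poly_of_coefs c.
    by rewrite map_poc; apply: poc_eq => i; rewrite phiX /coef_vec split_r.
  have hfC : map_poly (map_poly phi) f0^:P = (poly_of_coefs a)^:P.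
    by rewrite -hf; apply/polyP => i; rewrite !coef_map /= map_polyC.
  have hR : map_poly phi Rk0 = ResF m Db (poly_of_coefs a)^:P (map_poly (map_poly phi) B0).
    by rewrite /Rk0 (ResF_map (map_poly phi)) hfC.
  exists (map_poly (map_poly phi) B0); split.
  - by rewrite -hR -hf -ResF_map.
  - rewrite -hg -hh -Wp_map hB0 rmorphM rmorphB /= map_polyX map_polyC /= map_polyX.
    by [].
  - exact: leq_trans (size_map_le _ _) (leqnSn _).
  - by rewrite -hR (leq_trans (size_map_le _ _)) // leqnSn.
exists (ResF m D f0 Rk0); split.
  apply/negP => /eqP Psi0.
  pose a := fun i : 'I_m.+1 => (frat m)`_(m - i).
  pose b := fun i : 'I_n.+1 => ('X^n : {poly rat})`_(n - i).
  pose c := fun i : 'I_n.+1 => (1 : {poly rat})`_(n - i).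
  have [B [E W sB sR]] := key _ a b c.
  have ha : poly_of_coefs a = frat m by rewrite poc_coefs // size_frat.
  have hb : poly_of_coefs b = 'X^n by rewrite poc_coefs // size_polyXn.
  have hc : poly_of_coefs c = 1 by rewrite poc_coefs // size_poly1.
  rewrite ha in E sR; rewrite hb hc in W.
  have := core_nonzero (ltnW hn) sB sR W.
  by rewrite -E Psi0 /eval_int_mpoly mmap0 eqxx.
move=> k a b c hst.
have [B [E W sB sR]] := key k a b c.
rewrite E; apply: core_vanish W hst => //.
- exact: ltnW.
- exact: size_poc.
Qed.
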